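(* The map $\mathcal K'(\mathbb C^n)\to\mathcal K'(\mathbb C^n)$, $K\mapsto\widehat K$, is measurable.
   Context: $\mathcal K'(\mathbb C^n)$ is the space of non-empty compact subsets of $\mathbb C^n$ with the Hausdorff distance and its Borel $\sigma$-algebra. $\widehat K=\{z\in\mathbb C^n:|p(z)|\le\max_{x\in K}|p(x)| \text{ for all polynomials } p\}$ is the polynomially convex hull. *)

(* Defs.v *)
From HB Require Import structures.
From mathcomp Require Import all_boot all_order all_algebra.
From mathcomp Require Import all_classical all_reals all_analysis.
From mathcomp Require Import complex.
From mathcomp Require mpoly.
Import numFieldTopology.Exports numFieldNormedType.Exports.
Import Order.TTheory GRing.Theory Num.Theory.

Set Implicit Arguments.
Unset Strict Implicit.
Unset Printing Implicit Defensive.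

Local Open Scope ring_scope.
Local Open Scope classical_set_scope.

(* The complex numbers R[i] (R a real closed archimedean complete field,
   i.e. a model of the reals) with their usual metric topology (the one
   induced by the complex modulus), as for any numClosedFieldType. *)
HB.instance Definition _ (R : realType) :=
  PseudoPointedMetric.copy R[i] (R[i])^o.

Section Defs.
Variables (R : realType) (n : nat).

(* C^n, as row vectors of length n (product topology = Euclidean topology). *)
Definition Cn := 'rV[R[i]]_n.

Definition cmod (z : R[i]) : R := ComplexField.Normc.normc z.

Definition edist (z w : Cn) : R :=
  Num.sqrt (\sum_(i < n) cmod (z ord0 i - w ord0 i) ^+ 2).

Definition Kprime := {K : set Cn | compact K /\ K !=set0}.

Definition setdist (z : Cn) (B : set Cn) : R := inf [set edist z b | b in B].

Definition hausdorff (A B : set Cn) : R :=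
  Num.max (sup [set setdist a B | a in A]) (sup [set setdist b A | b in B]).

Definition hdist (K L : Kprime) : R := hausdorff (proj1_sig K) (proj1_sig L).

Definition hopen (U : set Kprime) : Prop :=
  forall K, U K -> exists2 e : R, 0 < e & forall L, hdist K L < e -> U L.

Definition hborel (B : set Kprime) : Prop := <<s [set U | hopen U] >> B.

Definition cpoly := mpoly.mpoly n R[i].
Definition peval (p : cpoly) (z : Cn) : R[i] := mpoly.meval (fun i => z ord0 i) p.

(* max_{x in K} |p(x)| (a sup, attained for K compact non-empty) *)
Definition pmax (p : cpoly) (K : set Cn) : R := sup [set cmod (peval p x) | x in K].

Definition pchull (K : set Cn) : set Cn :=
  [set z | forall p : cpoly, cmod (peval p z) <= pmax p K].

End Defs.

(* Main.v *)
Require Import Defs.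
From HB Require Import structures.
From mathcomp Require Import all_boot all_order all_algebra.
From mathcomp Require Import all_classical all_reals all_analysis.
From mathcomp Require Import complex.
From mathcomp Require mpoly.
From mathcomp Require Import ring lra.
Import numFieldTopology.Exports numFieldNormedType.Exports.
Import Order.TTheory GRing.Theory Num.Theory.
Local Open Scope ring_scope.
Local Open Scope classical_set_scope.
Local Open Scope complex_scope.

Section Basics.
Variable R : realType.
Implicit Types (a b : R[i]).

Lemma normCE a : `|a| = (cmod a)%:C. Proof. by []. Qed.

Lemma cmod_ge0 a : 0 <= cmod a.
Proof. by rewrite -ler0c -normCE. Qed.

Lemma cmodD a b : cmod (a + b) <= cmod a + cmod b.
Proof. exact: le_normcD. Qed.

Lemma cmodN a : cmod (- a) = cmod a.
Proof. exact: normcN. Qed.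

Lemma cmodB a b : cmod (a - b) = cmod (b - a).
Proof. by rewrite -cmodN opprB. Qed.

Lemma cmodM a b : cmod (a * b) = cmod a * cmod b.
Proof. exact: ComplexField.Normc.normcM. Qed.

Lemma cmod0 : cmod (0 : R[i]) = 0.
Proof. exact: ComplexField.Normc.normc0. Qed.

Lemma cmod_sub_le a b : `|cmod a - cmod b| <= cmod (a - b).
Proof.
have h1 : cmod b <= cmod a + cmod (b - a).
  by rewrite -{1}[b](subrK a) addrC cmodD.
have h2 : cmod a <= cmod b + cmod (a - b).
  by rewrite -{1}[a](subrK b) addrC cmodD.
rewrite cmodB in h1; rewrite ler_norml; apply/andP; split; lra.
Qed.

Lemma ltc0R (e : R) : (0 < e%:C) = (0 < e).
Proof. exact: (ltcR 0 e). Qed.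

Lemma lec0R (e : R) : (0 <= e%:C) = (0 <= e).
Proof. exact: (lecR 0 e). Qed.

Lemma ballC (x y : R[i]) (e : R) : ball x e%:C y <-> cmod (x - y) < e.
Proof. by rewrite /ball /= normCE ltcR. Qed.

Lemma cmod_cont : continuous (@cmod R).
Proof.
move=> z; apply/(@cvgrPdist_lt _ _ _ (nbhs z) (nbhs_filter z)) => e e0.
apply/nbhs_ballP; exists e%:C; first by rewrite /= ltc0R.
move=> w /ballC Hw; exact: le_lt_trans (cmod_sub_le _ _) Hw.
Qed.

End Basics.
Arguments normCE {R}. Arguments cmod_ge0 {R}. Arguments cmodD {R}. Arguments cmodN {R}.
Arguments cmodB {R}. Arguments cmodM {R}. Arguments cmod_sub_le {R}. Arguments ballC {R}.

Section CnS.
Context {R : realType} {n : nat}.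
Local Notation Cn := (Cn R n).
Implicit Types z w u : Cn.

Definition rho z w : R := \big[Num.max/0]_(i < n) cmod (z ord0 i - w ord0 i).

Lemma rho_lt z w e : 0 < e -> (rho z w < e <-> forall i, cmod (z ord0 i - w ord0 i) < e).
Proof.
move=> e0; rewrite /rho; split => [/bigmax_ltP [_ H] i | H]; first exact: H.
by apply/bigmax_ltP; split=> // i _; exact: H.
Qed.

Lemma rho_le z w e : 0 <= e -> (rho z w <= e <-> forall i, cmod (z ord0 i - w ord0 i) <= e).
Proof.
move=> e0; rewrite /rho; split => [/bigmax_leP [_ H] i | H]; first exact: H.
by apply/bigmax_leP; split=> // i _; exact: H.
Qed.

Lemma rho_ge0 z w : 0 <= rho z w.
Proof.
rewrite /rho; apply: (big_ind (fun x => 0 <= x)) => // [x y hx hy|i _].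
  by rewrite le_max hx.
exact: cmod_ge0.
Qed.

Lemma coord_le_rho z w i : cmod (z ord0 i - w ord0 i) <= rho z w.
Proof. exact: (proj1 (rho_le z w _ (rho_ge0 z w)) (lexx _) i). Qed.

Lemma rho_sym z w : rho z w = rho w z.
Proof.
apply/eqP; rewrite eq_le; apply/andP; split; apply/rho_le; try exact: rho_ge0;
  by move=> i; rewrite cmodB coord_le_rho.
Qed.

Lemma rho_tri z w u : rho z u <= rho z w + rho w u.
Proof.
apply/rho_le; first by rewrite addr_ge0 // rho_ge0.
move=> i.
have -> : z ord0 i - u ord0 i = (z ord0 i - w ord0 i) + (w ord0 i - u ord0 i).
  by rewrite addrA subrK.
have h1 := cmodD (z ord0 i - w ord0 i) (w ord0 i - u ord0 i).
have h2 := coord_le_rho z w i; have h3 := coord_le_rho w u i.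
lra.
Qed.

Lemma rho_xx z : rho z z = 0.
Proof.
apply/eqP; rewrite eq_le rho_ge0 andbT; apply/rho_le => // i.
by rewrite subrr cmod0.
Qed.

Lemma ballCn z w (e : R) : 0 < e -> (ball z e%:C w <-> rho z w < e).
Proof.
move=> e0; rewrite rho_lt //; rewrite /ball /=; split.
  by move=> [_ H] i; apply/ballC; exact: H.
move=> H; split; first by rewrite ltc0R.
by move=> i j; rewrite (ord1 i); apply/ballC; exact: H.
Qed.

Lemma cont_eps (g : Cn -> R) :
  (forall z e, 0 < e -> exists2 d, 0 < d & forall w, rho z w < d -> `|g z - g w| < e) ->
  continuous g.
Proof.
move=> H z; apply/(@cvgrPdist_lt _ _ _ (nbhs z) (nbhs_filter z)) => e e0.
have [d d0 Hd] := H z e e0.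
apply/nbhs_ballP; exists d%:C; first by rewrite /= ltc0R.
by move=> w /(ballCn _ _ _ d0) Hw; exact: Hd.
Qed.

Lemma ball_openCn z (e : R) : open (ball z e%:C).
Proof. exact: ball_open. Qed.

End CnS.

Section Poly.
Context {R : realType} {n : nat}.
Local Notation Cn := (Cn R n).

Lemma cont_coord i : continuous (fun z : Cn => z ord0 i).
Proof. exact: coord_continuous. Qed.

Lemma cont_sum (I : Type) (s : seq I) (f : I -> Cn -> R[i]) :
  (forall i, continuous (f i)) -> continuous (fun z => \sum_(i <- s) f i z).
Proof.
move=> H; elim: s => [|a s IH].
  by under eq_fun do rewrite big_nil; exact: cst_continuous.
under eq_fun do rewrite big_cons.
by move=> z; exact: (@continuousD R[i] (R[i])^o _ _ _ z (H a z) (IH z)).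
Qed.

Lemma cont_prod (I : Type) (s : seq I) (f : I -> Cn -> R[i]) :
  (forall i, continuous (f i)) -> continuous (fun z => \prod_(i <- s) f i z).
Proof.
move=> H; elim: s => [|a s IH].
  by under eq_fun do rewrite big_nil; exact: cst_continuous.
under eq_fun do rewrite big_cons.
by move=> z; exact: (@continuousM R[i] _ _ _ z (H a z) (IH z)).
Qed.

Lemma cont_exp (f : Cn -> R[i]) k : continuous f -> continuous (fun z => f z ^+ k).
Proof.
move=> H; elim: k => [|k IH].
  by under eq_fun do rewrite expr0; exact: cst_continuous.
under eq_fun do rewrite exprS.
by move=> z; exact: (@continuousM R[i] _ _ _ z (H z) (IH z)).
Qed.

Lemma cont_peval (p : cpoly R n) : continuous (peval p).
Proof.
rewrite /peval.
under eq_fun do rewrite mpoly.mevalE.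
apply: cont_sum => m z.
have hc : {for z, continuous (fun _ : Cn => mpoly.mcoeff m p)} by move=> ?; exact: cst_continuous.
apply: (@continuousM R[i] _ (fun _ => mpoly.mcoeff m p) _ z hc).
by apply: cont_prod => i; apply: cont_exp; exact: cont_coord.
Qed.

Lemma cont_cmod_peval (p : cpoly R n) : continuous (fun z => cmod (peval p z)).
Proof. by move=> z; apply: continuous_comp; [exact: cont_peval | exact: cmod_cont]. Qed.

End Poly.

Section Finite.
Context {R : realType}.

Lemma fin_min (I : eqType) (s : seq I) (P : I -> R -> Prop) :
  (forall i, i \in s -> exists2 d, 0 < d & forall d', 0 < d' -> d' <= d -> P i d') ->
  exists2 d, 0 < d & forall i, i \in s -> forall d', 0 < d' -> d' <= d -> P i d'.
Proof.
elim: s => [_|a s IH H]; first by exists 1.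
have [da da0 Ha] := H a (mem_head _ _).
have [ds ds0 Hs] : exists2 d, 0 < d & forall i, i \in s -> forall d', 0 < d' -> d' <= d -> P i d'.
  by apply: IH => i iS; apply: H; rewrite in_cons iS orbT.
exists (Num.min da ds); first by rewrite lt_min da0.
move=> i; rewrite in_cons => /orP [/eqP -> | iS] d' d'0 hd'.
  by apply: Ha => //; apply: le_trans hd' _; rewrite ge_min lexx.
by apply: Hs => //; apply: le_trans hd' _; rewrite ge_min lexx orbT.
Qed.

Lemma fin_min0 (I : eqType) (s : seq I) (h : I -> R) :
  (forall i, i \in s -> 0 < h i) -> exists2 d, 0 < d & forall i, i \in s -> d <= h i.
Proof.
move=> H.
have [d d0 Hd] := @fin_min I s (fun i d => d <= h i)
  (fun i iS => ex_intro2 _ _ (h i) (H i iS) (fun d' _ h => h)).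
by exists d => // i iS; exact: (Hd i iS d d0 (lexx _)).
Qed.

End Finite.

Section Compact.
Context {R : realType} {n : nat}.
Local Notation Cn := (Cn R n).

Lemma ltrD1 (M : R) : M < M + 1. Proof. by rewrite ltrDl. Qed.

Lemma cont_bounded (g : Cn -> R) (K : set Cn) : continuous g -> compact K ->
  exists M, forall z, K z -> g z <= M.
Proof.
move=> gc Kc.
have : compact (g @` K).
  apply: continuous_compact => //; exact: continuous_subspaceT.
move/compact_bounded => [M [Mr HM]].
exists (M + 1) => z Kz.
have := HM (M + 1) (ltrD1 M) (g z) (ex_intro2 _ _ z Kz erefl).
move=> /= h; exact: le_trans (ler_norm _) h.
Qed.

Lemma cont_epsP (g : Cn -> R) : continuous g -> forall z e, 0 < e ->
  exists2 d, 0 < d & forall w, rho z w < d -> `|g z - g w| < e.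
Proof.
move=> gc z e e0.
have := gc z; move/(@cvgrPdist_lt _ _ _ (nbhs z) (nbhs_filter z)) => /(_ e e0).
move/nbhs_ballP => [r /= r0 Hr].
have [rI rR] : complex.Im r = 0 /\ 0 < complex.Re r.
  by move: r0; rewrite ltcE /= => /andP [/eqP h1 h2]; split.
have re : r = (complex.Re r)%:C by case: r rI {r0 rR Hr} => a b /= ->.
rewrite re in Hr.
by exists (complex.Re r) => // w hw; apply: Hr; apply/ballCn.
Qed.

Lemma unif_cont (g : Cn -> R) (K : set Cn) (e : R) : continuous g -> compact K -> 0 < e ->
  exists2 d, 0 < d & forall v k, K k -> rho v k < d -> exists2 k', K k' & g v < g k' + e.
Proof.
move=> gc Kc e0.
pose D := [set kd : Cn * R | [/\ K kd.1, 0 < kd.2 &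
   forall w, rho kd.1 w < kd.2 *+ 2 -> `|g kd.1 - g w| < e]].
pose f := fun kd : Cn * R => ball kd.1 (kd.2)%:C.
rewrite compact_cover in Kc.
have Kcov : K `<=` cover D f.
  move=> k Kk.
  have [d d0 Hd] := @cont_epsP g gc k e e0.
  exists (k, d / 2) => /=.
    split => //; first by rewrite divr_gt0.
    by move=> w /=; rewrite mulr2n -splitr; exact: Hd.
  by apply/ballCn; [rewrite divr_gt0 | rewrite rho_xx divr_gt0].
have [D' sD' cov] := Kc _ D f (fun i _ => ball_openCn _ _) Kcov.
  have [d d0 Hd] := @fin_min0 R _ (finmap.enum_fset D') (fun kd : Cn * R => kd.2)
    (fun i iD => ltac:(by case/set_mem: (sD' i iD))).
  exists d => // v k Kk hvk.
  have [[k0 d0'] /= kD' hk] := cov k Kk.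
  have [/= Kk0 /= d0'0 /= Hk0] := set_mem (sD' _ kD').
  exists k0 => //.
  have hd := Hd _ kD'; rewrite /= in hd.
  move/(ballCn _ _ _ d0'0): hk => hk.
  have : rho k0 v < d0' *+ 2.
    apply: le_lt_trans (rho_tri k0 k v) _; rewrite rho_sym in hvk.
    rewrite mulr2n /=; rewrite /= in hk; lra.
  move/Hk0; rewrite ltr_norml => /andP [h1 h2]; lra.
Qed.

End Compact.
Arguments cont_bounded {R n g K}.
Arguments cont_epsP {R n g}.
Arguments unif_cont {R n g K e}.

Section Disk.
Context {R : realType}.

Lemma sqrt_le (a c : R) : 0 <= c -> a <= c ^+ 2 -> Num.sqrt a <= c.
Proof. by move=> c0 h; rewrite -(ger0_norm c0) -sqrtr_sqr ler_sqrt // sqr_ge0. Qed.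

Lemma le_sqrt (a c : R) : 0 <= c -> c ^+ 2 <= a -> c <= Num.sqrt a.
Proof.
move=> c0 h; rewrite -(ger0_norm c0) -sqrtr_sqr ler_sqrt //.
exact: le_trans (sqr_ge0 c) h.
Qed.

Lemma cmodE (a b : R) : cmod (a +i* b) = Num.sqrt (a ^+ 2 + b ^+ 2).
Proof. by []. Qed.

Lemma cmod_le (a b : R) : cmod (a +i* b) <= `|a| + `|b|.
Proof.
rewrite cmodE; apply: sqrt_le; first by rewrite addr_ge0.
have ha : `|a| ^+ 2 = a ^+ 2 by rewrite -normrX ger0_norm // sqr_ge0.
have hb : `|b| ^+ 2 = b ^+ 2 by rewrite -normrX ger0_norm // sqr_ge0.
have hab : 0 <= `|a| * `|b| by rewrite mulr_ge0.
rewrite sqrrD ha hb; lra.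
Qed.

Lemma Re_le_cmod (c : R[i]) : `|complex.Re c| <= cmod c.
Proof.
case: c => a b; rewrite cmodE /=; apply: le_sqrt => //.
have ha : `|a| ^+ 2 = a ^+ 2 by rewrite -normrX ger0_norm // sqr_ge0.
rewrite ha lerDl; exact: sqr_ge0.
Qed.

Lemma Im_le_cmod (c : R[i]) : `|complex.Im c| <= cmod c.
Proof.
case: c => a b; rewrite cmodE /=; apply: le_sqrt => //.
have hb : `|b| ^+ 2 = b ^+ 2 by rewrite -normrX ger0_norm // sqr_ge0.
rewrite hb lerDr; exact: sqr_ge0.
Qed.

Lemma posCR (r : R[i]) : 0 < r -> r = (complex.Re r)%:C /\ 0 < complex.Re r.
Proof.
move=> r0; have [rI rR] : complex.Im r = 0 /\ 0 < complex.Re r.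
  by move: r0; rewrite ltcE /= => /andP [/eqP h1 h2]; split.
by split => //; case: r rI {r0 rR} => a b /= ->.
Qed.

Lemma cont_mkC : continuous (fun ab : R * R => (ab.1 +i* ab.2 : R[i])).
Proof.
move=> [a b] P /nbhs_ballP [r r0 Hr].
have [re rR] := posCR r r0.
rewrite re in Hr.
apply/nbhs_ballP; exists (complex.Re r / 2); first by rewrite /= divr_gt0.
move=> [a' b'] [/= ha hb]; apply: Hr; apply/ballC.
have -> : (a +i* b) - (a' +i* b') = (a - a') +i* (b - b') by [].
apply: le_lt_trans (cmod_le _ _) _.
rewrite /ball /= in ha hb.
rewrite [X in _ < X]splitr; exact: ltrD.
Qed.

Lemma disk_compact (r : R) : compact [set c : R[i] | cmod c <= r].
Proof.
have sq : compact (`[- r, r] `*` `[- r, r] : set (R * R)).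
  by apply: compact_setX; exact: segment_compact.
have im := continuous_compact (continuous_subspaceT cont_mkC) sq.
apply: subclosed_compact im _.
  have -> : [set c : R[i] | cmod c <= r] = (@cmod R) @^-1` [set x | x <= r] by [].
  apply: preimage_closed; last exact: closed_le.
  by move=> x _; exact: cmod_cont.
move=> [a b] /= hc; exists (a, b) => //; split => /=.
  have := Re_le_cmod (a +i* b) => /= h.
  by rewrite in_itv /= -ler_norml; exact: le_trans h hc.
have := Im_le_cmod (a +i* b) => /= h.
by rewrite in_itv /= -ler_norml; exact: le_trans h hc.
Qed.

End Disk.

Section Hull.
Context {R : realType} {n : nat}.
Local Notation Cn := (Cn R n).
Implicit Types (K : set Cn) (p : cpoly R n).

Definition Box (r : R) : set Cn := [set z | forall i, cmod (z ord0 i) <= r].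

Lemma box_compact r : compact (Box r).
Proof. exact: (@rV_compact _ n (fun _ => [set c : R[i] | cmod c <= r]) (fun _ => disk_compact r)). Qed.

Lemma pmax_ub K p : compact K -> forall x, K x -> cmod (peval p x) <= pmax p K.
Proof.
move=> Kc x Kx; have [M HM] := cont_bounded (cont_cmod_peval p) Kc.
apply: (ub_le_sup _) => //; last by exists x.
by exists M => _ [y Ky <-]; exact: HM.
Qed.

Lemma pmax_le K p c : K !=set0 -> (forall x, K x -> cmod (peval p x) <= c) -> pmax p K <= c.
Proof.
move=> [x Kx] H; apply: ge_sup; first by exists (cmod (peval p x)), x.
by move=> _ [y Ky <-]; exact: H.
Qed.

Lemma hull_sup K : compact K -> K `<=` pchull K.
Proof. by move=> Kc x Kx p; exact: pmax_ub. Qed.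

Definition Xc (i : 'I_n) : cpoly R n := mpoly.mpolyX R[i] (mpoly.mnm1 i).

Lemma peval_Xc i z : peval (Xc i) z = z ord0 i.
Proof. by rewrite /peval /Xc mpoly.mevalXU. Qed.

Lemma hull_closed K : closed (pchull K).
Proof.
have -> : pchull K = \bigcap_(p in [set: cpoly R n])
    ((fun z => cmod (peval p z)) @^-1` [set x | x <= pmax p K]).
  by rewrite eqEsubset; split => [z hz p _ | z hz p]; [exact: hz | exact: hz].
apply: closed_bigI => p _; apply: preimage_closed; last exact: closed_le.
by move=> z _; exact: cont_cmod_peval.
Qed.

Lemma hull_box K r : K !=set0 -> (forall x i, K x -> cmod (x ord0 i) <= r) -> pchull K `<=` Box r.
Proof.
move=> K0 H z hz i; have := hz (Xc i); rewrite peval_Xc => h.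
apply: le_trans h _; apply: pmax_le => // x Kx; rewrite peval_Xc; exact: H.
Qed.

Lemma compact_coord_bound K : compact K -> exists r, forall x i, K x -> cmod (x ord0 i) <= r.
Proof.
move=> Kc.
have gc : continuous (fun z : Cn => \sum_(i <- index_enum 'I_n) cmod (z ord0 i)).
  elim: (index_enum 'I_n) => [|a s IH].
    by under eq_fun do rewrite big_nil; exact: cst_continuous.
  under eq_fun do rewrite big_cons.
  move=> z; apply: (@continuousD R R^o _ _ _ z _ (IH z)).
  by apply: continuous_comp; [exact: cont_coord | exact: cmod_cont].
have [M HM] := cont_bounded gc Kc.
exists M => x i Kx; apply: le_trans (HM x Kx).
rewrite -/(\sum_(i < n) cmod (x ord0 i)).
rewrite (bigD1 i) //= lerDl; apply: sumr_ge0 => j _; exact: cmod_ge0.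
Qed.

Lemma hull_compact K : compact K -> K !=set0 -> compact (pchull K) /\ pchull K !=set0.
Proof.
move=> Kc K0; split; last by case: K0 => x Kx; exists x; exact: hull_sup.
have [r Hr] := compact_coord_bound K Kc.
exact: subclosed_compact (hull_closed K) (box_compact r) (hull_box _ _ K0 Hr).
Qed.

End Hull.

Section Haus.
Context {R : realType} {n : nat}.
Local Notation Cn := (Cn R n).
Implicit Types (A B : set Cn) (z w : Cn).

Lemma edist_ge0 z w : 0 <= Defs.edist z w.
Proof. exact: sqrtr_ge0. Qed.

Lemma rho_le_edist z w : rho z w <= Defs.edist z w.
Proof.
apply/rho_le; first exact: edist_ge0.
move=> i; apply: le_sqrt; first exact: cmod_ge0.
rewrite (bigD1 i) //= lerDl; apply: sumr_ge0 => j _; exact: sqr_ge0.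
Qed.

Lemma edist_le_rho z w : Defs.edist z w <= n%:R * rho z w.
Proof.
apply: sqrt_le; first by rewrite mulr_ge0 // rho_ge0.
apply: (@le_trans _ _ (\sum_(i < n) rho z w ^+ 2)).
  apply: ler_sum => i _; rewrite !expr2; apply: ler_pM; try exact: cmod_ge0;
  exact: coord_le_rho.
rewrite sumr_const card_ord exprMn -[rho z w ^+ 2 *+ n]mulr_natl.
apply: ler_wpM2r; first exact: sqr_ge0.
case: n => [|m]; first by rewrite expr0n.
by rewrite -natrX ler_nat expnS leq_pmulr.
Qed.

Lemma setdist_le z B b : B b -> setdist z B <= Defs.edist z b.
Proof.
move=> Bb; apply: (ge_inf _) => //; last by exists b.
by exists 0 => _ [y _ <-]; exact: edist_ge0.
Qed.

Lemma setdist_ge0 z B : B !=set0 -> 0 <= setdist z B.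
Proof. by move=> B0; apply: lb_le_inf => [|_ [y _ <-]]; [case: B0 => b Bb; exists (Defs.edist z b), b | exact: edist_ge0]. Qed.

Lemma hausdorff_le A B t : A !=set0 -> B !=set0 ->
  (forall a, A a -> exists2 b, B b & Defs.edist a b <= t) ->
  (forall b, B b -> exists2 a, A a & Defs.edist b a <= t) -> hausdorff A B <= t.
Proof.
move=> [a0 Aa0] [b0 Bb0] HA HB; rewrite /hausdorff ge_max; apply/andP; split.
  apply: ge_sup; first by exists (setdist a0 B), a0.
  move=> _ [a Aa <-]; have [b Bb hb] := HA a Aa; exact: le_trans (setdist_le _ _ _ Bb) hb.
apply: ge_sup; first by exists (setdist b0 A), b0.
move=> _ [b Bb <-]; have [a Aa ha] := HB b Bb; exact: le_trans (setdist_le _ _ _ Aa) ha.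
Qed.

Lemma setdist_bounded A B : compact A -> B !=set0 -> has_ubound [set setdist a B | a in A].
Proof.
move=> Ac [b0 Bb0].
have [r Hr] := compact_coord_bound A Ac.
exists (n%:R * (`|r| + \sum_(i < n) cmod (b0 ord0 i))) => _ [a Aa <-].
apply: le_trans (setdist_le _ _ _ Bb0) _; apply: le_trans (edist_le_rho _ _) _.
have s0 : 0 <= \sum_(i < n) cmod (b0 ord0 i) by apply: sumr_ge0 => i _; exact: cmod_ge0.
apply: ler_wpM2l => //; apply/rho_le; first by rewrite addr_ge0.
move=> i; apply: le_trans (cmodD _ _) _; rewrite cmodN; apply: lerD.
  exact: le_trans (Hr a i Aa) (ler_norm _).
rewrite (bigD1 i) //= lerDl; apply: sumr_ge0 => j _; exact: cmod_ge0.
Qed.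


Lemma hausdorff_sym A B : hausdorff A B = hausdorff B A.
Proof. by rewrite /hausdorff maxC. Qed.

Lemma hausdorff_lt1 A B t : compact A -> B !=set0 -> hausdorff A B < t ->
  forall a, A a -> exists2 b, B b & Defs.edist a b < t.
Proof.
move=> Ac B0 ht a Aa.
have h1 : setdist a B <= sup [set setdist a' B | a' in A].
  exact: (ub_le_sup (setdist_bounded _ _ Ac B0)) _ (ex_intro2 _ _ a Aa erefl).
have h2 : sup [set setdist a' B | a' in A] <= hausdorff A B by rewrite /hausdorff le_max lexx.
have h3 : setdist a B < t by apply: le_lt_trans h1 (le_lt_trans h2 ht).
case: B0 => b0 Bb0.
have [_ [b Bb <-] hb] := inf_lt (ex_intro _ _ (ex_intro2 _ _ b0 Bb0 erefl)) h3.
by exists b.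
Qed.

Lemma hausdorff_lt2 A B t : compact B -> A !=set0 -> hausdorff A B < t ->
  forall b, B b -> exists2 a, A a & Defs.edist b a < t.
Proof. by rewrite hausdorff_sym; exact: hausdorff_lt1. Qed.

End Haus.
Arguments hausdorff_lt1 {R n A B t}.
Arguments hausdorff_lt2 {R n A B t}.
Arguments setdist_le {R n z B b}.
Arguments pmax_ub {R n K} p.
Arguments pmax_le {R n K p c}.
Arguments hull_box {R n K r}.

Section USC.
Context {R : realType} {n : nat}.
Local Notation Cn := (Cn R n).
Implicit Types (K L : set Cn).

Lemma rho_lt_edist {z w : Cn} {t : R} : Defs.edist z w < t -> rho z w < t.
Proof. exact: le_lt_trans (rho_le_edist z w). Qed.

Lemma closed_Box r : closed (@Box R n r).
Proof.
have -> : Box r = \bigcap_(i in [set: 'I_n]) ((fun z : Cn => cmod (z ord0 i)) @^-1` [set x | x <= r]).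
  by rewrite eqEsubset; split => [z hz i _ | z hz i]; [exact: hz | exact: hz].
apply: closed_bigI => i _; apply: preimage_closed; last exact: closed_le.
by move=> z _; apply: continuous_comp; [exact: cont_coord | exact: cmod_cont].
Qed.

Lemma closed_far (z : Cn) (e : R) : 0 < e -> closed [set w | e <= rho w z].
Proof.
move=> e0; have -> : [set w | e <= rho w z] = ~` ball z e%:C.
  rewrite eqEsubset; split => w /=.
    by move=> h /(ballCn _ _ _ e0); rewrite rho_sym ltNge h.
  move=> h; rewrite leNgt; apply/negP => h'; apply: h; apply/(ballCn _ _ _ e0).
  by rewrite rho_sym.
by rewrite closedC; exact: ball_openCn.
Qed.

Lemma open_gtp (p : cpoly R n) (c : R) : open [set w : Cn | c < cmod (peval p w)].
Proof.
have -> : [set w : Cn | c < cmod (peval p w)] = (fun w => cmod (peval p w)) @^-1` [set x | c < x] by [].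
apply: open_comp; last exact: open_gt.
by move=> w _; exact: cont_cmod_peval.
Qed.

Lemma pmax_near K p c : compact K -> K !=set0 -> pmax p K < c ->
  exists2 d, 0 < d & forall d', 0 < d' -> d' <= d -> forall L, compact L -> L !=set0 ->
     hausdorff K L < d' -> pmax p L < c.
Proof.
move=> Kc K0 hc.
have e0 : 0 < (c - pmax p K) / 2 by rewrite divr_gt0 // subr_gt0.
have [d d0 Hd] := unif_cont (cont_cmod_peval p) Kc e0.
exists d => // d' d'0 hd' L Lc L0 hKL.
have : pmax p L <= pmax p K + (c - pmax p K) / 2.
  apply: pmax_le => // l Ll.
  have [k Kk hk] := hausdorff_lt2 Lc K0 hKL l Ll.
  have hk' : rho l k < d by apply: lt_le_trans (rho_lt_edist hk) hd'.
  have [k' Kk' h] := Hd l k Kk hk'.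
  have := pmax_ub p Kc k' Kk'; lra.
lra.
Qed.

Lemma usc K eta : compact K -> K !=set0 -> 0 < eta ->
  exists2 d, 0 < d & forall L, compact L -> L !=set0 -> hausdorff K L < d ->
    forall w, pchull L w -> exists2 z, pchull K z & rho w z < eta.
Proof.
move=> Kc K0 eta0.
have [r Hr] := compact_coord_bound K Kc.
pose C := Box (r + 1) `&` [set w | forall z, pchull K z -> eta <= rho w z].
have Cc : compact C.
  apply: (subclosed_compact _ (box_compact (r + 1))); last by move=> w [].
  apply: closedI; first exact: closed_Box.
  have -> : [set w | forall z, pchull K z -> eta <= rho w z] =
      \bigcap_(z in pchull K) [set w | eta <= rho w z].
    by rewrite eqEsubset; split => w hw z hz; exact: hw.
  by apply: closed_bigI => z _; exact: closed_far.
pose D := [set pc : {classic (cpoly R n)} * R | pmax pc.1 K < pc.2].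
pose f := fun pc : {classic (cpoly R n)} * R => [set w : Cn | pc.2 < cmod (peval pc.1 w)].
have Ccov : C `<=` cover D f.
  move=> w [_ hw].
  have : ~ pchull K w.
    by move=> hK; have := hw w hK; rewrite rho_xx leNgt eta0.
  move/existsNP => [p /negP]; rewrite -ltNge => hp.
  exists (p, (pmax p K + cmod (peval p w)) / 2); rewrite /D /f /=; lra.
rewrite compact_cover in Cc.
have [F sF covF] := Cc _ D f (fun i _ => open_gtp _ _) Ccov.
have [d1 d10 Hd1] := @fin_min R _ (finmap.enum_fset F)
   (fun pc d => forall L, compact L -> L !=set0 -> hausdorff K L < d -> pmax pc.1 L < pc.2)
   (fun pc hpc => pmax_near K pc.1 pc.2 Kc K0 (set_mem (sF pc hpc))).
exists (Num.min 1 d1); first by rewrite lt_min ltr01 d10.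
move=> L Lc L0 hKL w hw.
case: (pselect (exists2 z, pchull K z & rho w z < eta)) => // Hn; exfalso.
have wC : C w.
  split.
    have hL : forall l i, L l -> cmod (l ord0 i) <= r + 1.
      move=> l i Ll.
      have h1 : hausdorff K L < 1 by apply: lt_le_trans hKL _; rewrite ge_min lexx.
      have [k Kk hk] := hausdorff_lt2 Lc K0 h1 l Ll.
      have := rho_lt_edist hk; move/(rho_lt _ _ _ ltr01) => /(_ i) h.
      have := Hr k i Kk; have := cmodD (l ord0 i - k ord0 i) (k ord0 i); rewrite subrK.
      lra.
    exact: hull_box L0 hL w hw.
  move=> z hz; rewrite leNgt; apply/negP => h; apply: Hn; by exists z.
have [[p c] pcF /= hpc] := covF w wC.
have hmin : Num.min 1 d1 <= d1 by rewrite ge_min lexx orbT.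
have hpos : 0 < Num.min 1 d1 by rewrite lt_min ltr01 d10.
have := Hd1 (p, c) pcF (Num.min 1 d1) hpos hmin L Lc L0 hKL.
rewrite /f /= in hpc; have := hw p; move=> h1 /= h2; lra.
Qed.

End USC.

Section Borel.
Context {R : realType} {n : nat}.
Local Notation Cn := (Cn R n).
Local Notation KP := (Kprime R n).
Implicit Types (A B : set KP).

Lemma hb_open A : hopen A -> hborel A.
Proof. by move=> hA; apply: sub_sigma_algebra. Qed.

Lemma hb_C A : hborel A -> hborel (~` A).
Proof. by move=> hA; rewrite -setTD; exact: sigma_algebraCD. Qed.

Lemma hb_bigcup (F : (set KP)^nat) : (forall k, hborel (F k)) -> hborel (\bigcup_k F k).
Proof. exact: sigma_algebra_bigcup. Qed.

Lemma hb_bigcap (F : (set KP)^nat) : (forall k, hborel (F k)) -> hborel (\bigcap_k F k).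
Proof.
move=> H; rewrite -[X in hborel X]setCK setC_bigcap; apply: hb_C.
by apply: hb_bigcup => k; exact: hb_C.
Qed.

Lemma hb_U A B : hborel A -> hborel B -> hborel (A `|` B).
Proof.
move=> hA hB.
have -> : A `|` B = \bigcup_k (if k is 0 then A else B).
  rewrite eqEsubset; split => [x [xA|xB]|x [[|k] _ h]]; [by exists 0 | by exists 1 | by left | by right].
by apply: hb_bigcup => -[|k].
Qed.

Lemma hb_I A B : hborel A -> hborel B -> hborel (A `&` B).
Proof.
move=> hA hB; rewrite -[X in hborel X]setCK setCI; apply: hb_C.
by apply: hb_U; exact: hb_C.
Qed.

Lemma hb_T : hborel [set: KP].
Proof. by rewrite -setC0; apply: hb_C; exact: sigma_algebra0. Qed.

Lemma hb_countable (J : countType) (G : J -> set KP) :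
  (forall j, hborel (G j)) -> hborel (\bigcup_(j in [set: J]) G j).
Proof.
move=> H.
have -> : \bigcup_(j in [set: J]) G j =
    \bigcup_k (if @unpickle J k is Some j then G j else set0).
  rewrite eqEsubset; split => [x [j _ hj]|x [k _]].
    by exists (pickle j) => //; rewrite pickleK.
  by case: (unpickle k) => // j hj; exists j.
apply: hb_bigcup => k; case: (unpickle k) => // j.
exact: sigma_algebra0.
Qed.

Lemma hb_preim (f : KP -> KP) : (forall U, hopen U -> hborel (f @^-1` U)) ->
  forall B, hborel B -> hborel (f @^-1` B).
Proof.
move=> H B hB.
have S : sigma_algebra setT [set B | hborel (f @^-1` B)].
  split => [|A hA|F hF] /=.
  - by rewrite preimage_set0; exact: sigma_algebra0.
  - have -> : f @^-1` (setT `\` A) = setT `\` f @^-1` A.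
      by apply/seteqP; split => x /= [_ h].
    exact: sigma_algebraCD.
  - by rewrite preimage_bigcup; exact: hb_bigcup.
exact: (smallest_sub S H) hB.
Qed.

End Borel.
Arguments usc {R n K eta}.
Arguments hull_compact {R n K}.

Section Main.
Context {R : realType} {n : nat}.
Local Notation Cn := (Cn R n).
Local Notation KP := (Kprime R n).

Lemma max_lt {h : Cn -> R} {K : set Cn} {c : R} : continuous h -> compact K ->
  (forall z, K z -> h z < c) -> exists2 eta, 0 < eta & forall z, K z -> h z <= c - eta.
Proof.
move=> hc Kc H.
pose D := [set d : R | 0 < d].
pose f := fun d : R => [set z : Cn | h z < c - d].
have fo : forall d, D d -> open (f d).
  move=> d _; have -> : f d = h @^-1` [set x | x < c - d] by [].
  by apply: open_comp; [move=> z _; exact: hc | exact: open_lt].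
have cov : K `<=` cover D f.
  move=> z Kz; exists ((c - h z) / 2); have hz := H z Kz; rewrite /D /f /=.
    by rewrite divr_gt0 // subr_gt0.
  lra.
rewrite compact_cover in Kc.
have [F sF covF] := Kc _ D f fo cov.
have [eta eta0 Heta] := @fin_min0 R _ (finmap.enum_fset F) id (fun d hd => set_mem (sF d hd)).
exists eta => // z Kz; have [d dF hd] := covF z Kz.
have := Heta d dF; rewrite /f /= in hd; lra.
Qed.

Definition hullK (K : KP) : KP :=
  exist (fun A => compact A /\ A !=set0) (pchull (sval K))
    (hull_compact (proj1 (svalP K)) (proj2 (svalP K))).

Lemma lip_cont (h : Cn -> R) : (forall z w, h w <= h z + rho w z) -> continuous h.
Proof.
move=> hL; apply: cont_eps => z e e0; exists e => // w hw.
have := hL z w; have := hL w z; rewrite (rho_sym w z) => h1 h2.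
rewrite ltr_norml; apply/andP; split; lra.
Qed.

Lemma open_sub (h : Cn -> R) (c : R) : (forall z w, h w <= h z + rho w z) ->
  hopen [set K : KP | forall z, pchull (sval K) z -> h z < c].
Proof.
move=> hL K /= HK.
have hc := lip_cont h hL.
have [Hc H0] := hull_compact (proj1 (svalP K)) (proj2 (svalP K)).
have [eta eta0 Heta] := max_lt hc Hc HK.
have [Kc K0] := svalP K.
have [d d0 Hd] := usc Kc K0 eta0.
exists d => // L hKL z hz.
have [Lc L0] := svalP L.
have [w hw hzw] := Hd (sval L) Lc L0 hKL z hz.
have := Heta w hw; have := hL w z; lra.
Qed.

End Main.

Section Main2.
Context {R : realType} {n : nat}.
Local Notation Cn := (Cn R n).
Local Notation KP := (Kprime R n).

Definition gmin (x0 : Cn) (D : seq Cn) (z : Cn) : R :=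
  foldr (fun x acc => Order.min (rho z x) acc) (rho z x0) D.

Lemma gmin_le x0 D z x : x \in x0 :: D -> gmin x0 D z <= rho z x.
Proof.
elim: D => [|y D IH]; first by rewrite mem_seq1 => /eqP ->.
rewrite in_cons => /orP [/eqP ex|].
  by subst x; rewrite /= ge_min (IH (mem_head _ _)) orbT.
rewrite in_cons => /orP [/eqP ->|xD]; rewrite /= ge_min; first by rewrite lexx.
by rewrite IH ?orbT // in_cons xD orbT.
Qed.

Lemma gmin_ex x0 D z : exists2 x, x \in x0 :: D & gmin x0 D z = rho z x.
Proof.
elim: D => [|y D [x hx IH]]; first by exists x0; rewrite ?mem_head.
rewrite /=; case: (leP (rho z y) (gmin x0 D z)) => h.
  by exists y; rewrite // !in_cons eqxx orbT.
exists x; last by [].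
by move: hx; rewrite !in_cons => /orP [->|->]; rewrite ?orbT.
Qed.

Lemma gmin_lip x0 D z w : gmin x0 D w <= gmin x0 D z + rho w z.
Proof.
have [x hx ->] := gmin_ex x0 D z.
apply: le_trans (gmin_le _ _ w _ hx) _.
by rewrite addrC; exact: rho_tri.
Qed.

Lemma rhoN_lip (x z w : Cn) : - rho w x <= - rho z x + rho w z.
Proof. have := rho_tri z w x; rewrite (rho_sym z w); lra. Qed.

Definition Wset (x0 : Cn) (D : seq Cn) (s : R) : set (set Cn) :=
  [set L | (forall z, L z -> gmin x0 D z <= s) /\
           (forall x, x \in x0 :: D -> exists2 l, L l & rho l x <= s)].

Lemma W_haus x0 D s (A L : set Cn) : A !=set0 -> L !=set0 ->
  Wset x0 D s A -> Wset x0 D s L -> hausdorff A L <= n%:R * (s + s).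
Proof.
move=> A0 L0 [A1 A2] [L1 L2].
apply: hausdorff_le => // [a Aa|l Ll].
  have [x hx e] := gmin_ex x0 D a.
  have [l Ll hl] := L2 x hx.
  exists l => //; apply: le_trans (edist_le_rho _ _) _; apply: ler_wpM2l => //.
  apply: le_trans (rho_tri a x l) _; rewrite (rho_sym x l); have := A1 a Aa; rewrite e; lra.
have [x hx e] := gmin_ex x0 D l.
have [a Aa ha] := A2 x hx.
exists a => //; apply: le_trans (edist_le_rho _ _) _; apply: ler_wpM2l => //.
apply: le_trans (rho_tri l x a) _; rewrite (rho_sym x a); have := L1 l Ll; rewrite e; lra.
Qed.

Lemma natinv (e : R) : 0 < e -> exists m : nat, m.+1%:R^-1 < e.
Proof.
move=> e0.
have [N _ hN] := near_infty_natSinv_lt (PosNum e0).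
by exists N; apply: hN => /=.
Qed.

Lemma hb_W x0 D s : hborel (hullK @^-1` [set L : KP | Wset x0 D s (sval L)]).
Proof.
pose A1 := \bigcap_m [set K : KP | forall z, pchull (sval K) z -> gmin x0 D z < s + m.+1%:R^-1].
pose Bl := fun l : seq Cn => [set K : KP | forall x, x \in l -> exists2 w, pchull (sval K) w & rho w x <= s].
have -> : hullK @^-1` [set L : KP | Wset x0 D s (sval L)] = A1 `&` Bl (x0 :: D).
  apply/seteqP; split => K /=.
    move=> [h1 h2]; split => // m _ z hz.
    have := h1 z hz; have : 0 < m.+1%:R^-1 :> R by rewrite invr_gt0.
    move: (m.+1%:R^-1) => t ? ?; lra.
  move=> [h1 h2]; split => // z hz.
  rewrite leNgt; apply/negP => hlt.
  have hp : 0 < gmin x0 D z - s by rewrite subr_gt0.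
  have [m hm] := natinv _ hp.
  have := h1 m I z hz; move: (m.+1%:R^-1) hm => t ? ?; lra.
apply: hb_I.
  apply: hb_bigcap => m; apply: hb_open; exact: open_sub (gmin_lip x0 D).
elim: (x0 :: D) => [|x l IH].
  have -> : Bl [::] = setT by apply/seteqP; split => K //= _ y; rewrite in_nil.
  exact: hb_T.
have -> : Bl (x :: l) = (~` [set K : KP | forall z, pchull (sval K) z -> - rho z x < - s]) `&` Bl l.
  apply/seteqP; split => K /=.
    move=> H; split; last by move=> y yl; apply: H; rewrite in_cons yl orbT.
    have [w hw hwx] := H x (mem_head _ _).
    by move=> h; have := h w hw; rewrite ltrN2 ltNge hwx.
  move=> [H1 H2] y; rewrite in_cons => /orP [/eqP -> | yl]; last exact: H2.
  move/existsNP: H1 => [z hz]; exists z.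
    by apply: contrapT => hn; apply: hz => /hn.
  by rewrite leNgt; apply/negP => h; apply: hz => _; rewrite ltrN2.
apply: hb_I => //; apply: hb_C; apply: hb_open.
exact: open_sub (fun z w => rhoN_lip x z w).
Qed.

Definition ratC (q : rat * rat) : R[i] := (ratr q.1) +i* (ratr q.2).
Definition ptQ (g : {ffun 'I_n -> rat * rat}) : Cn := \row_i ratC (g i).

Lemma ratC_approx (c : R[i]) (e : R) : 0 < e -> exists q, cmod (c - ratC q) < e.
Proof.
move=> e0; case: c => a b.
have h1 : a - e / 2 < a + e / 2 by lra.
have h2 : b - e / 2 < b + e / 2 by lra.
have [qa] := rat_in_itvoo h1; rewrite in_itv /= => /andP [qa1 qa2].
have [qb] := rat_in_itvoo h2; rewrite in_itv /= => /andP [qb1 qb2].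
exists (qa, qb).
rewrite /= -cmodE.
apply: le_lt_trans (cmod_le _ _) _.
have ha : `|a - ratr qa| < e / 2 by rewrite ltr_norml; apply/andP; split; lra.
have hb : `|b - ratr qb| < e / 2 by rewrite ltr_norml; apply/andP; split; lra.
lra.
Qed.

Lemma ptQ_approx (a : Cn) (e : R) : 0 < e -> exists g, rho a (ptQ g) < e.
Proof.
move=> e0.
have [g Hg] := choice (fun i : 'I_n => ratC_approx (a ord0 i) e e0).
exists [ffun i => g i]; apply/rho_lt => // i; rewrite /ptQ mxE ffunE; exact: Hg.
Qed.

Definition J := ({ffun 'I_n -> rat * rat} * seq {ffun 'I_n -> rat * rat} * rat)%type.

Definition Wj (j : J) : set (set Cn) := Wset (ptQ j.1.1) (map ptQ j.1.2) (ratr j.2).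

Definition WJ (j : J) : set KP :=
  [set L | Wset (ptQ j.1.1) (map ptQ j.1.2) (ratr j.2) (sval L)].

Lemma density (A : set Cn) (eps : R) : compact A -> A !=set0 -> 0 < eps ->
  exists2 j : J, Wj j A & forall L, L !=set0 -> Wj j L -> hausdorff A L < eps.
Proof.
move=> Ac [a0 Aa0] eps0.
have hN : 0 < eps / (n.*2.+1)%:R by rewrite divr_gt0 // ltr0n.
have [q] := rat_in_itvoo hN; rewrite in_itv /= => /andP [q0 qe].
set s := ratr q : R.
have s2 : 0 < s / 2 by rewrite divr_gt0.
have [qf Hqf] := choice (fun a : Cn => ptQ_approx a _ s2).
pose f := fun a : Cn => ball a (s / 2)%:C.
have cov : A `<=` cover A f.
  by move=> a Aa; exists a => //; apply/(ballCn _ _ _ s2); rewrite rho_xx.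
rewrite compact_cover in Ac.
have [F sF covF] := Ac _ A f (fun a _ => ball_openCn _ _) cov.
pose j : J := ((qf a0, map qf (finmap.enum_fset F)), q).
have WA : Wj j A.
  rewrite /Wj /= -map_comp; split.
    move=> z Az; have [a aF ha] := covF z Az.
    move/(ballCn _ _ _ s2): ha => ha.
    have hx : ptQ (qf a) \in ptQ (qf a0) :: map (ptQ \o qf) (finmap.enum_fset F).
      by rewrite in_cons (map_f (ptQ \o qf) aF) orbT.
    apply: le_trans (gmin_le _ _ z _ hx) _.
    apply: le_trans (rho_tri z a (ptQ (qf a))) _; rewrite (rho_sym z a).
    have := Hqf a; lra.
  move=> x; rewrite in_cons => /orP [/eqP -> | ].
    by exists a0 => //; have := Hqf a0; lra.
  move=> /mapP [a aF ->].
  by exists a; [exact: set_mem (sF a aF) | have := Hqf a; rewrite /=; lra].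
exists j => // L L0 WL.
apply: le_lt_trans (W_haus _ _ _ _ _ (ex_intro _ a0 Aa0) L0 WA WL) _.
have h := qe; rewrite ltr_pdivlMr ?ltr0n // in h.
have hn : (n.*2.+1)%:R = n%:R * 2 + 1 :> R by rewrite -addn1 natrD -muln2 natrM.
rewrite hn in h; have hn0 : 0 <= n%:R :> R by [].
nra.
Qed.

Lemma hb_open_preim (U : set KP) : hopen U -> hborel (hullK @^-1` U).
Proof.
move=> hU.
pose G := fun j : J => if pselect (WJ j `<=` U) then hullK @^-1` (WJ j) else set0.
have -> : hullK @^-1` U = \bigcup_(j in [set: J]) G j.
  apply/seteqP; split => K /=.
    move=> HU; have [e e0 He] := hU _ HU.
    have [Hc H0] := svalP (hullK K).
    have [j hWj Hj] := density _ _ Hc H0 e0.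
    exists j => //; rewrite /G; destruct (pselect (WJ j `<=` U)) as [hs|hn]; first exact: hWj.
    exfalso; apply: hn => L WL; apply: He; apply: Hj => //; exact: proj2 (svalP L).
  move=> [j _]; rewrite /G; destruct (pselect (WJ j `<=` U)) as [hs|hn] => // hj.
  exact: hs _ hj.
apply: hb_countable => j; rewrite /G; destruct (pselect (WJ j `<=` U)) => //.
  exact: hb_W.
exact: sigma_algebra0.
Qed.

End Main2.

Theorem corollary6p14 (R : realType) (n : nat) :
  exists f : Kprime R n -> Kprime R n,
    (forall K, proj1_sig (f K) = pchull (proj1_sig K)) /\
    (forall B : set (Kprime R n), hborel B -> hborel (f @^-1` B)).
Proof.
exists hullK; split => //; apply: hb_preim; exact: hb_open_preim.
Qed.
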